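(* For every integer $k\ge 1$, every $\mathcal{O}_k$-free graph $G$ of girth at least 11 has average degree $2|E(G)|/|V(G)|$ at most $2k$.
   Context: All graphs are finite, simple and nonempty. Two vertex-disjoint subgraphs are independent if there is no edge between them. A graph $G$ is $\mathcal{O}_k$-free if it does not contain $k$ pairwise vertex-disjoint and pairwise independent cycles; equivalently, $G$ has no induced subgraph isomorphic to a disjoint union of $k$ cycles. The girth is the minimum length of a cycle (infinite for forests). *)

(* Defs.v *)
From mathcomp Require Import all_boot.
Set Implicit Arguments. Unset Strict Implicit. Unset Printing Implicit Defensive.

Definition simple_graph (T : finType) (e : rel T) : Prop :=
  symmetric e /\ irreflexive e.

Definition is_cycle (T : finType) (e : rel T) (s : seq T) : bool :=
  [&& 3 <= size s, uniq s & cycle e s].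

Definition disj_indep (T : finType) (e : rel T) (s t : seq T) : Prop :=
  forall x y, x \in s -> y \in t -> x != y /\ ~~ e x y.

Definition has_k_indep_cycles (T : finType) (e : rel T) (k : nat) : Prop :=
  exists C : 'I_k -> seq T,
    (forall i, is_cycle e (C i)) /\
    (forall i j, i != j -> disj_indep e (C i) (C j)).

Definition Ok_free (T : finType) (e : rel T) (k : nat) : Prop :=
  ~ has_k_indep_cycles e k.

Definition girth_ge (T : finType) (e : rel T) (g : nat) : Prop :=
  forall s : seq T, is_cycle e s -> g <= size s.

(* number of edges: unordered pairs {x,y} with e x y *)
Definition num_edges (T : finType) (e : rel T) : nat :=
  #|[set p : T * T | e p.1 p.2]| %/ 2.

(* Main.v *)
Require Import Defs.
From mathcomp Require Import all_boot zify.
Set Implicit Arguments. Unset Strict Implicit. Unset Printing Implicit Defensive.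

Definition cross (T : finType) (e : rel T) (X Y : {set T}) : nat :=
  \sum_(x in X) \sum_(y in Y) (e x y : nat).

Lemma sum_setU (T : finType) (A B : {set T}) (F : T -> nat) :
  [disjoint A & B] -> \sum_(x in A :|: B) F x = \sum_(x in A) F x + \sum_(x in B) F x.
Proof.
move=> dAB; rewrite -bigU //; apply: eq_bigl => x; by rewrite !inE.
Qed.

Lemma cross_Ur (T : finType) (e : rel T) (X A B : {set T}) : [disjoint A & B] ->
  cross e X (A :|: B) = cross e X A + cross e X B.
Proof.
move=> d; rewrite /cross -big_split /=; apply: eq_bigr => x _; exact: sum_setU.
Qed.

Lemma cross_Ul (T : finType) (e : rel T) (X A B : {set T}) : [disjoint A & B] ->
  cross e (A :|: B) X = cross e A X + cross e B X.
Proof. move=> d; exact: sum_setU. Qed.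

Lemma cross_sym (T : finType) (e : rel T) (X Y : {set T}) : symmetric e ->
  cross e X Y = cross e Y X.
Proof.
move=> sy; rewrite /cross exchange_big; apply: eq_bigr => y _; apply: eq_bigr => x _.
by rewrite sy.
Qed.

Lemma cross_split (T : finType) (e : rel T) (A B : {set T}) : symmetric e -> [disjoint A & B] ->
  cross e (A :|: B) (A :|: B) = cross e A A + cross e B B + 2 * cross e A B.
Proof.
move=> sy d; rewrite cross_Ul // !cross_Ur // (@cross_sym _ _ B A) //; lia.
Qed.

Lemma sum_eq1 (T : finType) (Y : {set T}) (h : T) : \sum_(y in Y) ((y == h) : nat) <= 1.
Proof.
apply: (@leq_trans (\sum_y ((y == h) : nat))).
  by rewrite [X in _ <= X](bigID (mem Y)) /= leq_addr.
by rewrite (bigD1 h) //= eqxx big1 // => y /negbTE ->.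
Qed.

Lemma sum_le1 (T : finType) (Y : {set T}) (P : pred T) :
  (forall y z, y \in Y -> z \in Y -> P y -> P z -> y = z) ->
  \sum_(y in Y) (P y : nat) <= 1.
Proof.
move=> uP; case: (pickP [pred y | (y \in Y) && P y]) => [y0 /andP[Y0 P0]|none].
  apply: leq_trans (sum_eq1 Y y0); apply: leq_sum => y Yy.
  case Py: (P y) => //; by rewrite (uP _ _ Yy Y0 Py P0) eqxx.
rewrite big1 // => y Yy; move: (none y) => /=; rewrite Yy /=; by move->.
Qed.

Lemma sum_le2 (T : finType) (Y : {set T}) (P : pred T) h l :
  (forall y, y \in Y -> P y -> (y == h) || (y == l)) ->
  \sum_(y in Y) (P y : nat) <= 2.
Proof.
move=> H; apply: (@leq_trans (\sum_(y in Y) ((y == h) : nat) + \sum_(y in Y) ((y == l) : nat))).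
  rewrite -big_split /=; apply: leq_sum => y Yy; case Py: (P y) => //.
  by move: (H y Yy Py); case: (y == h); case: (y == l).
by have := sum_eq1 Y h; have := sum_eq1 Y l; lia.
Qed.

Lemma path_rev_sym (T : eqType) (e : rel T) (x y : T) (q : seq T) :
  symmetric e -> path e x (rcons q y) -> path e y (rcons (rev q) x).
Proof.
move=> sy; elim: q x => [|z q IH] x /=; first by rewrite sy andbT => ->.
case/andP=> exz /IH h; rewrite rev_cons rcons_path h last_rcons sy //.
Qed.

Definition inS (T : finType) (S : {set T}) (s : seq T) := all (fun z => z \in S) s.

Lemma inS_sub (T : finType) (S : {set T}) (s s' : seq T) :
  {subset s <= s'} -> inS S s' -> inS S s.
Proof. by move=> sub /allP H; apply/allP => z /sub /H. Qed.

Ltac bt5 x y a b q :=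
  let z := fresh "z" in intro z; rewrite !(inE, mem_cat, mem_rev);
  by case: (z == x); case: (z == y); case: (z \in a); case: (z \in b); case: (z \in q).

Lemma detour (T : finType) (e : rel T) (S : {set T}) x y a b q :
  symmetric e ->
  (forall c, is_cycle e c -> inS S c -> size (x :: a ++ y :: b) <= size c) ->
  cycle e (x :: a ++ y :: b) -> uniq (x :: a ++ y :: b ++ q) ->
  inS S (x :: a ++ y :: b ++ q) ->
  path e x (rcons q y) -> 0 < size a + size q -> 0 < size b + size q ->
  size a + size b <= 2 * size q.
Proof.
move=> sy hmin cyc U IS pq ha hb.
have [pa pb] : path e x (rcons a y) /\ path e y (rcons b x).
  move: cyc; rewrite /= rcons_cat rcons_cons cat_path /= !rcons_path.
  by case/and4P=> -> -> -> ->.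
have h1 : size (x :: a ++ y :: b) <= size (x :: a ++ y :: rev q).
  apply: hmin; last first.
    by apply: inS_sub IS; bt5 x y a b q.
  rewrite /is_cycle; apply/and3P; split.
  - by rewrite /= size_cat /= size_rev; lia.
  - have U2 : uniq (x :: a ++ y :: q ++ b).
      by rewrite (perm_uniq (s2 := x :: a ++ y :: b ++ q)) // perm_cons perm_cat2l perm_cons perm_catC.
    have U3 : uniq (x :: a ++ y :: q).
      by move: U2; rewrite -cat_cons -cat1s -[y :: q ++ b]cat_cons catA cat_uniq => /andP[].
    by rewrite (perm_uniq (s2 := x :: a ++ y :: q)) // perm_cons perm_cat2l perm_cons perm_rev.
  rewrite /= rcons_cat rcons_cons cat_path /=.
  move: pa; rewrite rcons_path => /andP[-> ->] /=.
  exact: path_rev_sym.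
have h2 : size (x :: a ++ y :: b) <= size (y :: b ++ x :: q).
  apply: hmin; last first.
    by apply: inS_sub IS; bt5 x y a b q.
  rewrite /is_cycle; apply/and3P; split.
  - by rewrite /= size_cat /=; lia.
  - have U2 : uniq (x :: y :: b ++ q).
      apply: subseq_uniq U; rewrite /= eqxx.
      rewrite -cat_cons; exact: suffix_subseq.
    rewrite (perm_uniq (s2 := x :: y :: b ++ q)) //.
    by rewrite -cat_cons -cat1s (perm_catCA (y :: b) [:: x] q).
  rewrite /= rcons_cat rcons_cons cat_path /=.
  move: pb; rewrite rcons_path => /andP[-> ->] /=.
  exact: pq.
move: h1 h2; rewrite /= !size_cat /= size_rev; lia.
Qed.

Lemma cyc_rot (T : eqType) (e : rel T) c x : cycle e c -> x \in c ->
  exists t, perm_eq c (x :: t) /\ cycle e (x :: t).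
Proof.
move=> cyc xc; case/splitPr: xc cyc => p1 p2 cyc; exists (p2 ++ p1); split.
  by rewrite -cat_cons perm_catC.
by rewrite -cat_cons -rot_size_cat rot_cycle.
Qed.

Definition shortest (T : finType) (e : rel T) (S : {set T}) c :=
  [/\ is_cycle e c, inS S c &
      forall c', is_cycle e c' -> inS S c' -> size c <= size c'].

Lemma no_short_attach (T : finType) (e : rel T) (S : {set T}) (c : seq T) x y q :
  symmetric e -> girth_ge e 11 -> shortest e S c ->
  x \in c -> y \in c -> uniq q -> (forall z, z \in q -> z \notin c) -> inS S q ->
  path e x (rcons q y) -> 0 < size q -> size q <= 3 -> (x != y) || (1 < size q) -> False.
Proof.
move=> sy gi [ccy cS hmin] xc yc uq qc qS pq q0 q3.
have /and3P[c3 cu cc] := ccy.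
case: (eqVneq x y) => [exy|nxy] /= hq.
  subst y.
  have := gi (x :: q); rewrite /is_cycle /= ltnS hq uq andbT.
  have -> : x \in q = false by apply/negP => /qc; rewrite xc.
  rewrite pq => /(_ isT) H. move: H q3. rewrite ltnS. move=> H q3. have := leq_trans H q3. by [].
have [t [pt ct]] := cyc_rot cc xc.
have : y \in t by move: yc; rewrite (perm_mem pt) inE eq_sym (negbTE nxy).
move=> yt; case/splitPr: yt pt ct => a b pt ct.
have := @detour T e S x y a b q sy.
have hs : size c = size (x :: a ++ y :: b) by exact: perm_size.
rewrite -hs; move/(_ hmin ct).
have U : uniq (x :: a ++ y :: b ++ q).
  rewrite -cat_cons -[y :: b ++ q]cat_cons catA cat_uniq -(perm_uniq pt) cu uq andbT /=.
  by apply/hasPn => z /qc; rewrite (perm_mem pt).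
have I : inS S (x :: a ++ y :: b ++ q).
  rewrite /inS -cat_cons -[y :: b ++ q]cat_cons catA all_cat. apply/andP; split; last exact: qS.
  change (inS S ((x :: a) ++ y :: b)); by apply: inS_sub cS => z; rewrite (perm_mem pt).
move/(_ U I pq). rewrite !addn_gt0 q0 !orbT => /(_ isT isT) H1.
have H2 := gi c ccy.
move: hs; rewrite /= size_cat /=. move=> hs. clear -H1 H2 hs q3. set sq := size q in q3 H1. lia.
Qed.

Lemma chord (T : finType) (e : rel T) (S : {set T}) (c : seq T) x :
  symmetric e -> irreflexive e -> shortest e S c -> x \in c ->
  exists h l, forall y, y \in c -> e x y -> (y == h) || (y == l).
Proof.
move=> sy ir [ccy cS hmin] xc.
have /and3P[c3 cu cc] := ccy.
have [t [pt ct]] := cyc_rot cc xc.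
exists (head x t), (last x t) => y yc exy.
have : y \in t.
  move: yc; rewrite (perm_mem pt) inE; case: eqP => // eyx; by move: exy; rewrite eyx ir.
move=> yt; case/splitPr: yt pt ct => a b pt ct.
case: a pt ct => [|z a] pt ct; first by rewrite /= eqxx.
case: (lastP b) pt ct => [|b' w] pt ct; first by rewrite last_cat /= eqxx orbT.
exfalso.
have := @detour T e S x y (z :: a) (rcons b' w) [::] sy.
have hs : size c = size (x :: (z :: a) ++ y :: rcons b' w) by exact: perm_size.
rewrite -hs; move/(_ hmin ct).
rewrite cats0 -(perm_uniq pt) cu.
have I : inS S (x :: (z :: a) ++ y :: rcons b' w).
  by apply: inS_sub cS => u; rewrite (perm_mem pt).
move/(_ isT I); rewrite /= exy size_rcons => /(_ isT isT isT).
by [].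
Qed.

Lemma shortest_ex (T : finType) (e : rel T) (S : {set T}) c :
  is_cycle e c -> inS S c -> exists c0, shortest e S c0.
Proof.
move=> cc cS.
pose P n := [exists t : n.-tuple T, is_cycle e t && inS S t].
have exP : exists n, P n by exists (size c); apply/existsP; exists (in_tuple c); rewrite cc cS.
case: (ex_minnP exP) => n /existsP[t /andP[tc tS]] nmin.
exists (tval t); split => // c' c'c c'S.
rewrite size_tuple; apply: nmin; apply/existsP; exists (in_tuple c'); by rewrite c'c c'S.
Qed.

Lemma grow (T : finType) (e : rel T) (S : {set T}) x0 :
  symmetric e -> irreflexive e -> x0 \in S ->
  (forall x z, x \in S -> exists y, [&& y \in S, y != z & e x y]) ->
  forall m, (exists c, is_cycle e c /\ inS S c) \/
    (exists x p, [/\ size p = m, uniq (x :: p), path e x p & inS S (x :: p)]).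
Proof.
move=> sy ir x0S deg; elim=> [|m [IH|[x [p [sp up pp Sp]]]]]; first by right; exists x0, [::]; rewrite /inS /= x0S.
- by left.
have xS : x \in S by move: Sp; rewrite /inS /= => /andP[].
have [y /and3P[yS yh exy]] := deg x (head x p) xS.
case: (boolP (y \in x :: p)) => yp; last first.
  right; exists y, (x :: p); split => //=; first by rewrite sp.
  - by move: up yp => /= -> ->.
  - by rewrite sy exy.
  - by rewrite yS.
left.
have yx : y != x by apply/eqP => eyx; move: exy; rewrite eyx ir.
move: yp; rewrite inE (negbTE yx) /=.
case: p sp up pp Sp yh => [|z p'] //= sp up /andP[exz pp] Sp yz yp'.
move: yp'; rewrite inE (negbTE yz) /= => yp'.
case/splitPr: yp' sp up pp Sp => a b sp up pp Sp.
exists (x :: z :: rcons a y); split.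
  apply/and3P; split.
  - by rewrite /= size_rcons.
  - have U : uniq ((x :: z :: rcons a y) ++ b) by rewrite cat_cons cat_cons cat_rcons.
    by move: U; rewrite cat_uniq => /andP[].
  - rewrite /= exz rcons_path; move: pp; rewrite -cat_rcons cat_path => /andP[-> _].
    by rewrite last_rcons sy.
apply: (@inS_sub _ _ _ (x :: z :: a ++ y :: b)); last exact: Sp.
move=> u; rewrite !inE mem_rcons !inE mem_cat !inE.
by case: (u == x); case: (u == z); case: (u == y); case: (u \in a).
Qed.

Lemma cycle_exists (T : finType) (e : rel T) (S : {set T}) x0 :
  symmetric e -> irreflexive e -> x0 \in S ->
  (forall x z, x \in S -> exists y, [&& y \in S, y != z & e x y]) ->
  exists c, is_cycle e c /\ inS S c.
Proof.
move=> sy ir x0S deg; case: (grow sy ir x0S deg #|T|) => // [[x [p [sp up _ _]]]].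
have := max_card (mem (x :: p)); move/card_uniqP: up => ->; rewrite /= sp ltnn.
by [].
Qed.

Definition free_in (T : finType) (e : rel T) (S : {set T}) (k : nat) : Prop :=
  ~ exists C : 'I_k -> seq T,
    (forall i, is_cycle e (C i) /\ inS S (C i)) /\
    (forall i j, i != j -> disj_indep e (C i) (C j)).

Lemma step (T : finType) (e : rel T) (S : {set T}) (c : seq T) (k : nat) :
  symmetric e -> irreflexive e -> girth_ge e 11 -> shortest e S c ->
  free_in e S k.+1 ->
  (forall S', free_in e S' k -> cross e S' S' <= 2 * k * #|S'|) ->
  cross e S S <= 2 * k.+1 * #|S|.
Proof.
move=> sy ir gi sh fr IHk.
have [ccy cS hmin] := sh.
have /and3P[c3 cu cc] := ccy.
pose Cs := [set x | x \in c].
pose N := [set u in S | (u \notin c) && has (e u) c].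
pose B := Cs :|: N.
pose R := S :\: B.
have CsS : Cs \subset S by apply/subsetP => x; rewrite inE => /(allP cS).
have NS : N \subset S by apply/subsetP => x; rewrite inE => /andP[].
have BS : B \subset S by rewrite subUset CsS NS.
have dCN : [disjoint Cs & N].
  by rewrite -setI_eq0; apply/eqP/setP => x; rewrite !inE; case: (x \in c); rewrite ?andbF.
have dBR : [disjoint B & R] by rewrite -setI_eq0 /R setDE setICA setICr setI0.
have eS : S = B :|: R by rewrite /R -{1}(setID S B) (setIidPr BS).
have Nm : forall u, u \in N -> [/\ u \in S, u \notin c & exists2 x, x \in c & e u x].
  move=> u; rewrite inE => /and3P[uS uc /hasP[x xc eux]]; split => //; by exists x.
have Rm : forall r, r \in R -> [/\ r \in S, r \notin c & forall x, x \in c -> ~~ e r x].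
  move=> r; rewrite !inE negb_or => /andP[/andP[rc rN] rS]; split => //.
  move=> x xc; apply/negP => erx; move: rN; rewrite rS rc /=.
  by apply/negP/negPn/hasP; exists x.
have fa : forall u x y, u \in S -> u \notin c -> x \in c -> y \in c -> e u x -> e u y -> x = y.
  move=> u x y uS uc xc yc eux euy; apply/eqP/negPn/negP => nxy.
  apply: (@no_short_attach T e S c x y [:: u]) => //.
  - by move=> z; rewrite inE => /eqP->.
  - by rewrite /inS /= uS.
  - by rewrite /= sy eux euy.
  - by rewrite nxy.
have fb : forall u v, u \in N -> v \in N -> ~~ e u v.
  move=> u v /Nm[uS uc [x xc eux]] /Nm[vS vc [y yc evy]]; apply/negP => euv.
  apply: (@no_short_attach T e S c x y [:: u; v]) => //.
  - rewrite /= inE andbT; apply/eqP => euv'; by move: euv; rewrite euv' ir.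
  - by move=> z; rewrite !inE => /orP[]/eqP->.
  - by rewrite /inS /= uS vS.
  - by rewrite /= sy eux euv evy.
  - by rewrite orbT.
have fc : forall r u v, r \in R -> u \in N -> v \in N -> e r u -> e r v -> u = v.
  move=> r u v rR uN vN eru erv; apply/eqP/negPn/negP => nuv.
  have [rS rc _] := Rm r rR.
  have [uS uc [x xc eux]] := Nm u uN.
  have [vS vc [y yc evy]] := Nm v vN.
  have rNN : r \notin N by move: rR; rewrite !inE negb_or => /andP[/andP[]].
  have nur : u != r by apply/eqP => eur; move: rNN; rewrite -eur uN.
  have nrv : r != v by apply/eqP => erv'; move: rNN; rewrite erv' vN.
  apply: (@no_short_attach T e S c x y [:: u; r; v]) => //.
  - by rewrite /= !inE negb_or nur nuv nrv.
  - by move=> z; rewrite !inE => /or3P[]/eqP->.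
  - by rewrite /inS /= uS rS vS.
  - by rewrite /= sy eux (sy u) eru erv evy.
  - by rewrite orbT.
have frR : free_in e R k.
  move=> [C [HC HCij]]; apply: fr.
  exists (fun i => oapp C c (unlift ord0 i)); split.
    move=> i; case: (unliftP ord0 i) => [j|] _ /=; last by [].
    have [Cc CR] := HC j; split => //; apply/allP => z /(allP CR).
    by rewrite inE => /andP[_ ->].
  have CRm : forall j z, z \in C j -> z \in R.
    by move=> j z zC; have [_ /allP] := HC j; apply.
  have cC : forall j x z, x \in c -> z \in C j -> x != z /\ ~~ e x z /\ ~~ e z x.
    move=> j x z xc zC; have [_ zc nez] := Rm z (CRm j z zC).
    split; first by apply/eqP => exz; move: zc; rewrite -exz xc.
    by rewrite sy nez.
  move=> i j; case: (unliftP ord0 i) => [i'|] ei; case: (unliftP ord0 j) => [j'|] ej /= nij.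
  - apply: HCij; apply/eqP => eij; move: nij; by rewrite ei ej eij eqxx.
  - by move=> x z xC zc; have [? [_ ?]] := cC i' z x zc xC; split => //; rewrite eq_sym.
  - by move=> x z xc zC; have [? [? _]] := cC j' x z xc zC.
  - by move: nij; rewrite ei ej eqxx.
have hRR := IHk R frR.
have hCC : cross e Cs Cs <= 2 * #|Cs|.
  rewrite mulnC -sum_nat_const; apply: leq_sum => x; rewrite inE => xc.
  have [h [l Hhl]] := chord sy ir sh xc.
  by apply: sum_le2 => y; rewrite inE; apply: Hhl.
have hNN : cross e N N = 0.
  by rewrite /cross big1 // => u uN; rewrite big1 // => v vN; rewrite (negbTE (fb u v uN vN)).
have hCN : cross e Cs N <= #|N|.
  rewrite cross_sym // -sum1_card; apply: leq_sum => u /Nm[uS uc _].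
  by apply: sum_le1 => y z; rewrite !inE; apply: fa.
have hRCs : cross e R Cs = 0.
  rewrite /cross big1 // => r rR; rewrite big1 // => y; rewrite inE => yc.
  by have [_ _ /(_ y yc)/negbTE->] := Rm r rR.
have hRN : cross e R N <= #|R|.
  rewrite -sum1_card; apply: leq_sum => r rR.
  by apply: sum_le1 => u v uN vN; apply: fc.
have cardB : #|B| = #|Cs| + #|N|.
  by have := cardsUI Cs N; move: dCN; rewrite -setI_eq0 => /eqP->; rewrite cards0 addn0.
have cardS : #|S| = #|B| + #|R|.
  by have := cardsUI B R; move: dBR; rewrite -setI_eq0 => /eqP->; rewrite cards0 addn0 -eS.
have hBR : cross e B R <= #|R|.
  by rewrite cross_sym // cross_Ur // hRCs.
rewrite {1 2}eS cross_split // cross_split // hNN cardS cardB.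
move: hRR hCC hCN hBR; set a := cross _ _ _; lia.
Qed.

Lemma free_mono (T : finType) (e : rel T) (A B : {set T}) k :
  A \subset B -> free_in e B k -> free_in e A k.
Proof.
move=> AB fr [C [HC HCij]]; apply: fr; exists C; split => // i.
have [Ci CA] := HC i; split => //; apply/allP => z /(allP CA); exact: (subsetP AB).
Qed.

Lemma main_ind (T : finType) (e : rel T) :
  symmetric e -> irreflexive e -> girth_ge e 11 ->
  forall k S, free_in e S k -> cross e S S <= 2 * k * #|S|.
Proof.
move=> sy ir gi; elim=> [|k IHk] S.
  move=> fr; exfalso; apply: fr; exists (fun _ => [::]); split; by case.
move: {2}#|S| (leqnn #|S|) => n; elim: n S => [|n IHn] S Sn fr.
  move: Sn; rewrite leqn0 cards_eq0 => /eqP->; by rewrite /cross big_set0.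
case: (boolP [exists v in S, \sum_(y in S) (e v y : nat) <= k.+1]).
  case/existsP => v /andP[vS dv].
  pose S' := S :\ v.
  have dvS : [disjoint [set v] & S'] by rewrite disjoints1 setD11.
  have eS : S = [set v] :|: S' by rewrite /S' setD1K.
  have cS : #|S| = #|S'|.+1 by rewrite (cardsD1 v S) vS.
  have hS' : cross e S' S' <= 2 * k.+1 * #|S'|.
    by apply: IHn; [by move: Sn; rewrite cS | exact: free_mono (subD1set S v) fr].
  have hvv : cross e [set v] [set v] = 0 by rewrite /cross !big_set1 ir.
  have hvS : cross e [set v] S' <= k.+1.
    apply: leq_trans dv; rewrite /cross big_set1 eS sum_setU // big_set1 ir.
    by [].
  rewrite {1 2}eS cross_split // hvv cS; move: hS' hvS; set a := cross _ _ _; lia.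
move=> nodeg.
case: (set_0Vmem S) => [->|[x0 x0S]]; first by rewrite /cross big_set0.
have deg : forall x z, x \in S -> exists y, [&& y \in S, y != z & e x y].
  move=> x z xS; case: (boolP [exists y, [&& y \in S, y != z & e x y]]) => [/existsP //|none]; exfalso.
  move: nodeg; rewrite negb_exists => /forallP/(_ x); rewrite xS /= -ltnNge.
  suff : \sum_(y in S) (e x y : nat) <= 1 by lia.
  apply: sum_le1 => y w yS wS exy exw.
  have := none; rewrite negb_exists => /forallP nn.
  have : y == z by move: (nn y); rewrite yS exy andbT negbK.
  have : w == z by move: (nn w); rewrite wS exw andbT negbK.
  by move=> /eqP-> /eqP->.
have [c [cc cS]] := cycle_exists sy ir x0S deg.
have [c0 sh] := shortest_ex cc cS.
exact: step sy ir gi sh fr IHk.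
Qed.

Theorem mainTheorem9 (k : nat) (T : finType) (e : rel T) :
  1 <= k -> 0 < #|T| -> simple_graph e -> Ok_free e k -> girth_ge e 11 ->
  2 * num_edges e <= 2 * k * #|T|.
Proof.
move=> _ _ [sy ir] ok gi.
have fr : free_in e setT k.
  move=> [C [HC HCij]]; apply: ok; exists C; split => // i; by have [] := HC i.
have H := main_ind sy ir gi fr; rewrite cardsT in H.
have E : #|[set p : T * T | e p.1 p.2]| = cross e setT setT.
  rewrite -sum1_card big_mkcond /= /cross.
  rewrite (eq_bigr (fun p : T * T => (e p.1 p.2 : nat))); last by move=> p _; rewrite inE; case: (e _ _).
  rewrite -(pair_big xpredT xpredT (fun x y => (e x y : nat))) /=.
  by apply: eq_big => [x|x _]; rewrite ?inE //; apply: eq_big => [y|y _]; rewrite ?inE.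
apply: leq_trans H; rewrite /num_edges E mulnC; exact: leq_divM.
Qed.
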